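(* (Partial resolution subformula property.) For any derivation $\mathcal{D}$ in the cut-free calculus $\mathsf{GT}^-$ of a sequent $\Gamma\Rightarrow\Delta$, each formula occurring in $\mathcal{D}$ is a subformula of a partial resolution of some formula occurring in $\Gamma,\Delta$.
   Context: Fix a countably infinite set $\mathsf{Prop}$ of propositional variables. Classical formulas are generated by $\alpha ::= p \mid \bot \mid \neg\alpha \mid \alpha\wedge\alpha \mid \alpha\vee\alpha$ with $p\in\mathsf{Prop}$. Formulas are generated by $\phi ::= \alpha \mid \phi\wedge\phi \mid \phi\vee\phi \mid \phi\mathbin{\backslash\!\!/}\phi$ where $\alpha$ is classical ($\vee$: split disjunction, $\mathbin{\backslash\!\!/}$: inquisitive disjunction). A sequent is $\Gamma\Rightarrow\Delta$ with $\Gamma,\Delta$ finite multisets of formulas; ''$\Gamma,\Delta$'' denotes multiset union. Partial resolutions: a partial resolution of a formula $\phi$ is any formula obtained from $\phi$ by a finite (possibly empty) sequence of steps, each of which replaces one occurrence of a subformula of the form $\psi_L\mathbin{\backslash\!\!/}\psi_R$ in the current formula by $\psi_L$ or by $\psi_R$. (Equivalently: label the occurrences of $\mathbin{\backslash\!\!/}$ in $\phi$ by distinct numbers; a partial resolution of degree $n$ results from successively choosing $n$ distinct labels and replacing the labelled subformula occurrence $\psi_L\mathbin{\backslash\!\!/}\psi_R$ by its left or right disjunct, leaving the formula unchanged if that occurrence no longer exists.) Deep-inference notation: for a formula $\chi$ with a designated occurrence of a subformula not in the scope of any negation, $\chi\{\eta\}$ denotes the result of replacing that occurrence by $\eta$.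 The cut-free calculus $\mathsf{GT}^-$ ($\alpha$ ranges over classical formulas, $\Lambda$ over multisets of classical formulas): axioms $\Gamma,p\Rightarrow p,\Delta$ and $\Gamma,\bot\Rightarrow\Delta$; (L$\neg$) from $\Gamma\Rightarrow\alpha,\Delta$ infer $\Gamma,\neg\alpha\Rightarrow\Delta$; (R$\neg$) from $\Gamma,\alpha\Rightarrow\Delta$ infer $\Gamma\Rightarrow\neg\alpha,\Delta$; (L$\wedge$) from $\Gamma,\phi,\psi\Rightarrow\Delta$ infer $\Gamma,\phi\wedge\psi\Rightarrow\Delta$; (R$\wedge$) from $\Gamma\Rightarrow\phi,\Lambda$ and $\Gamma\Rightarrow\psi,\Lambda$ infer $\Gamma\Rightarrow\phi\wedge\psi,\Lambda,\Delta$; (L$\vee$) from $\Gamma,\phi\Rightarrow\Lambda$ and $\Gamma,\psi\Rightarrow\Lambda$ infer $\Gamma,\phi\vee\psi\Rightarrow\Lambda,\Delta$; (R$\vee$) from $\Gamma\Rightarrow\phi,\psi,\Delta$ infer $\Gamma\Rightarrow\phi\vee\psi,\Delta$; (L$\mathbin{\backslash\!\!/}$) from $\Gamma,\chi\{\phi_L\}\Rightarrow\Delta$ and $\Gamma,\chi\{\phi_R\}\Rightarrow\Delta$ infer $\Gamma,\chi\{\phi_L\mathbin{\backslash\!\!/}\phi_R\}\Rightarrow\Delta$; (R$\mathbin{\backslash\!\!/}$) from $\Gamma\Rightarrow\chi\{\phi_i\},\Delta$ ($i\in\{L,R\}$) infer $\Gamma\Rightarrow\chi\{\phi_L\mathbin{\backslash\!\!/}\phi_R\},\Delta$.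 *)

(* Defs.v *)
From Stdlib Require Import List Permutation Relations.
Import ListNotations.

Inductive form : Type :=
| Var : nat -> form
| Bot : form
| Neg : form -> form
| And : form -> form -> form
| Or  : form -> form -> form      (* split (classical) disjunction *)
| Inq : form -> form -> form.

Fixpoint classical (f : form) : Prop :=
  match f with
  | Var _ | Bot => True
  | Neg a => classical a
  | And a b | Or a b => classical a /\ classical b
  | Inq _ _ => False
  end.

Fixpoint wf (f : form) : Prop :=
  match f with
  | Var _ | Bot => True
  | Neg a => classical a
  | And a b | Or a b | Inq a b => wf a /\ wf b
  end.

Inductive subform : form -> form -> Prop :=
| sub_refl : forall f, subform f f
| sub_neg : forall f a, subform f a -> subform f (Neg a)
| sub_andl : forall f a b, subform f a -> subform f (And a b)
| sub_andr : forall f a b, subform f b -> subform f (And a b)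
| sub_orl : forall f a b, subform f a -> subform f (Or a b)
| sub_orr : forall f a b, subform f b -> subform f (Or a b)
| sub_inql : forall f a b, subform f a -> subform f (Inq a b)
| sub_inqr : forall f a b, subform f b -> subform f (Inq a b).

Inductive res_step : form -> form -> Prop :=
| rs_left : forall a b, res_step (Inq a b) a
| rs_right : forall a b, res_step (Inq a b) b
| rs_neg : forall a a', res_step a a' -> res_step (Neg a) (Neg a')
| rs_andl : forall a a' b, res_step a a' -> res_step (And a b) (And a' b)
| rs_andr : forall a b b', res_step b b' -> res_step (And a b) (And a b')
| rs_orl : forall a a' b, res_step a a' -> res_step (Or a b) (Or a' b)
| rs_orr : forall a b b', res_step b b' -> res_step (Or a b) (Or a b')
| rs_inql : forall a a' b, res_step a a' -> res_step (Inq a b) (Inq a' b)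
| rs_inqr : forall a b b', res_step b b' -> res_step (Inq a b) (Inq a b').

Definition partial_resolution (phi psi : form) : Prop :=
  clos_refl_trans form res_step phi psi.

(* deep-inference contexts chi{ } : the hole is never in the scope of a negation *)
Inductive ctx : Type :=
| Hole : ctx
| CAndL : ctx -> form -> ctx
| CAndR : form -> ctx -> ctx
| COrL : ctx -> form -> ctx
| COrR : form -> ctx -> ctx
| CInqL : ctx -> form -> ctx
| CInqR : form -> ctx -> ctx.

Fixpoint plug (c : ctx) (e : form) : form :=
  match c with
  | Hole => e
  | CAndL c b => And (plug c e) b
  | CAndR a c => And a (plug c e)
  | COrL c b => Or (plug c e) b
  | COrR a c => Or a (plug c e)
  | CInqL c b => Inq (plug c e) b
  | CInqR a c => Inq a (plug c e)
  end.

(* Derivations in GT^-.  Sequents are pairs of lists read as finite multisets: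
   every rule conclusion is taken up to permutation of both sides. *)
Inductive deriv : list form -> list form -> Type :=
| ax_var : forall G D Ga De p,
    Permutation G (Var p :: Ga) -> Permutation D (Var p :: De) -> deriv G D
| ax_bot : forall G D Ga,
    Permutation G (Bot :: Ga) -> deriv G D
| r_negL : forall G D Ga a,
    classical a -> Permutation G (Neg a :: Ga) ->
    deriv Ga (a :: D) -> deriv G D
| r_negR : forall G D De a,
    classical a -> Permutation D (Neg a :: De) ->
    deriv (a :: G) De -> deriv G D
| r_andL : forall G D Ga f g,
    Permutation G (And f g :: Ga) ->
    deriv (f :: g :: Ga) D -> deriv G D
| r_andR : forall G D La De f g,
    Forall classical La -> Permutation D (And f g :: La ++ De) ->
    deriv G (f :: La) -> deriv G (g :: La) -> deriv G D
| r_orL : forall G D Ga La De f g,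
    Forall classical La -> Permutation G (Or f g :: Ga) ->
    Permutation D (La ++ De) ->
    deriv (f :: Ga) La -> deriv (g :: Ga) La -> deriv G D
| r_orR : forall G D De f g,
    Permutation D (Or f g :: De) ->
    deriv G (f :: g :: De) -> deriv G D
| r_inqL : forall G D Ga c f g,
    Permutation G (plug c (Inq f g) :: Ga) ->
    deriv (plug c f :: Ga) D -> deriv (plug c g :: Ga) D -> deriv G D
| r_inqR_l : forall G D De c f g,
    Permutation D (plug c (Inq f g) :: De) ->
    deriv G (plug c f :: De) -> deriv G D
| r_inqR_r : forall G D De c f g,
    Permutation D (plug c (Inq f g) :: De) ->
    deriv G (plug c g :: De) -> deriv G D.

Fixpoint sequents {G D} (d : deriv G D) : list (list form * list form) :=
  match d with
  | ax_var G D _ _ _ _ _ => [(G, D)]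
  | ax_bot G D _ _ => [(G, D)]
  | r_negL G D _ _ _ _ d1 => (G, D) :: sequents d1
  | r_negR G D _ _ _ _ d1 => (G, D) :: sequents d1
  | r_andL G D _ _ _ _ d1 => (G, D) :: sequents d1
  | r_andR G D _ _ _ _ _ _ d1 d2 => (G, D) :: sequents d1 ++ sequents d2
  | r_orL G D _ _ _ _ _ _ _ _ d1 d2 => (G, D) :: sequents d1 ++ sequents d2
  | r_orR G D _ _ _ _ d1 => (G, D) :: sequents d1
  | r_inqL G D _ _ _ _ _ d1 d2 => (G, D) :: sequents d1 ++ sequents d2
  | r_inqR_l G D _ _ _ _ _ d1 => (G, D) :: sequents d1
  | r_inqR_r G D _ _ _ _ _ d1 => (G, D) :: sequents d1
  end.

Definition occurs_in {G D} (d : deriv G D) (f : form) : Prop :=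
  exists s, In s (sequents d) /\ (In f (fst s) \/ In f (snd s)).

(* Main.v *)
Require Import Defs.
From Stdlib Require Import List Permutation Relations.
Import ListNotations.

Definition covered (L : list form) (f : form) : Prop :=
  exists g r, In g L /\ partial_resolution g r /\ subform f r.

Lemma subform_trans : forall a b c, subform a b -> subform b c -> subform a c.
Proof.
  intros a b c H1 H2; induction H2; auto.
  - apply sub_neg; auto.
  - apply sub_andl; auto.
  - apply sub_andr; auto.
  - apply sub_orl; auto.
  - apply sub_orr; auto.
  - apply sub_inql; auto.
  - apply sub_inqr; auto.
Qed.

Lemma lift_step : forall h r', subform h r' -> forall h2, res_step h h2 ->
  exists r'', res_step r' r'' /\ subform h2 r''.
Proof.
  intros h r' Hs; induction Hs; intros h2 Hr.
  - exists h2; split; [assumption| apply sub_refl].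
  - destruct (IHHs h2 Hr) as [w [H1 H2]]; exists (Neg w); split; [apply rs_neg | apply sub_neg]; auto.
  - destruct (IHHs h2 Hr) as [w [H1 H2]]; exists (And w b); split; [apply rs_andl | apply sub_andl]; auto.
  - destruct (IHHs h2 Hr) as [w [H1 H2]]; exists (And a w); split; [apply rs_andr | apply sub_andr]; auto.
  - destruct (IHHs h2 Hr) as [w [H1 H2]]; exists (Or w b); split; [apply rs_orl | apply sub_orl]; auto.
  - destruct (IHHs h2 Hr) as [w [H1 H2]]; exists (Or a w); split; [apply rs_orr | apply sub_orr]; auto.
  - destruct (IHHs h2 Hr) as [w [H1 H2]]; exists (Inq w b); split; [apply rs_inql | apply sub_inql]; auto.
  - destruct (IHHs h2 Hr) as [w [H1 H2]]; exists (Inq a w); split; [apply rs_inqr | apply sub_inqr]; auto.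
Qed.

Lemma lift_pr : forall h r, partial_resolution h r -> forall r', subform h r' ->
  exists r'', partial_resolution r' r'' /\ subform r r''.
Proof.
  unfold partial_resolution; intros h r H; induction H as [a b H|a|a b c H1 IH1 H2 IH2]; intros r' Hs.
  - destruct (lift_step _ _ Hs _ H) as [w [K1 K2]]; exists w; split; auto.
    apply rt_step; auto.
  - exists r'; split; auto. apply rt_refl.
  - destruct (IH1 _ Hs) as [x [K1 K2]].
    destruct (IH2 _ K2) as [w [K3 K4]].
    exists w; split; auto. eapply rt_trans; eauto.
Qed.

Lemma cov_trans : forall L L' f, covered L' f ->
  (forall h, In h L' -> covered L h) -> covered L f.
Proof.
  intros L L' f [h [r [Hi [Hp Hs]]]] HL.
  destruct (HL h Hi) as [g [r' [Hg [Hp' Hs']]]].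
  destruct (lift_pr _ _ Hp _ Hs') as [x [H1 H2]].
  exists g, x; repeat split; auto.
  - unfold partial_resolution in *; eapply rt_trans; eauto.
  - eapply subform_trans; eauto.
Qed.

Lemma cov_sub : forall L g h, In g L -> subform h g -> covered L h.
Proof. intros; exists g, g; repeat split; auto. apply rt_refl. Qed.

Lemma cov_in : forall L h, In h L -> covered L h.
Proof. intros; eapply cov_sub; eauto; constructor. Qed.

Lemma cov_res : forall L g r, In g L -> res_step g r -> covered L r.
Proof. intros; exists g, r; repeat split; auto. apply rt_step; auto. constructor. Qed.

Lemma plug_step_l : forall c f g, res_step (plug c (Inq f g)) (plug c f).
Proof. induction c; intros; simpl; constructor; auto. Qed.
Lemma plug_step_r : forall c f g, res_step (plug c (Inq f g)) (plug c g).
Proof. induction c; intros; simpl; constructor; auto. Qed.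

Lemma perm_in : forall (G L : list form) y, Permutation G L -> In y L -> In y G.
Proof. intros. eapply Permutation_in; [apply Permutation_sym; eauto| auto]. Qed.

Lemma sub_case : forall G D G1 D1 (P : form -> Prop),
  (forall h, In h (G1 ++ D1) -> covered (G ++ D) h) ->
  (forall f, P f -> covered (G1 ++ D1) f) ->
  forall f, P f -> covered (G ++ D) f.
Proof. intros. eapply cov_trans; eauto. Qed.

Lemma inL : forall (G D : list form) x, In x G -> In x (G ++ D).
Proof. intros; apply in_or_app; auto. Qed.
Lemma inR : forall (G D : list form) x, In x D -> In x (G ++ D).
Proof. intros; apply in_or_app; auto. Qed.

Ltac inperm :=
  first [ assumption
        | match goal with
          | P : Permutation ?X _ |- In _ ?X => eapply perm_in; [exact P | simpl; auto 10 using in_or_app]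
          end ].

Ltac prem :=
  let h := fresh "h" in let Hh := fresh "Hh" in
  intros h Hh; apply in_app_or in Hh; simpl in Hh;
  repeat (match type of Hh with
          | _ \/ _ => destruct Hh as [Hh|Hh]
          | In _ (_ ++ _) => apply in_app_or in Hh
          end);
  try subst h;
  first
  [ apply cov_in; first [apply inL; solve [inperm] | apply inR; solve [inperm]]
  | match goal with
    | P : Permutation ?X (?g :: _) |- covered _ ?h =>
        apply (cov_sub _ g h); [ first [apply inL; eapply perm_in; [exact P | left; reflexivity] | apply inR; eapply perm_in; [exact P | left; reflexivity]] | solve [eauto using subform] ]
    end
  | match goal with
    | P : Permutation ?X (?g :: _) |- covered _ ?h =>
        apply (cov_res _ g h); [ first [apply inL; eapply perm_in; [exact P | left; reflexivity] | apply inR; eapply perm_in; [exact P | left; reflexivity]] | first [apply plug_step_l | apply plug_step_r] ]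
    end
  ].

Ltac fin_case x Hx :=
  first
  [ match goal with
    | Hs : (_, _) = ?s |- _ => subst s; apply cov_in; simpl in Hx; destruct Hx; [apply inL|apply inR]; assumption
    end
  | match goal with
    | IH : forall f, occurs_in ?d1 f -> covered _ f, Hs : In ?s (sequents ?d1) |- _ =>
      eapply (sub_case _ _ _ _ (occurs_in d1)); [ | exact IH | exists s; split; [exact Hs | exact Hx] ]; prem
    end ].

Theorem main_lemma (G D : list form) (d : deriv G D) :
  forall f, occurs_in d f -> covered (G ++ D) f.
Proof.
  induction d; intros x [s [Hs Hx]]; simpl in Hs;
  (destruct Hs as [Hs|Hs]; [fin_case x Hx|]);
  try (simpl in Hs; contradiction);
  try (apply in_app_or in Hs; destruct Hs as [Hs|Hs]);
  fin_case x Hx.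
Qed.

Theorem proposition6p4 (G D : list form) (d : deriv G D) :
  (forall f, In f (G ++ D) -> wf f) ->
  forall f, occurs_in d f ->
  exists g r, In g (G ++ D) /\ partial_resolution g r /\ subform f r.
Proof.
  intros _ f H. exact (main_lemma G D d f H).
Qed.
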